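(* Let $S$ be a gcd-category and $a,b\in S$. (1) If $\mathrm{s}(a)=\mathrm{s}(b)$, the following are equivalent: $\varepsilon_S(a),\varepsilon_S(b)$ have a right lcm in $\mathrm{U_{mon}}(S)$; $\varepsilon_S(a),\varepsilon_S(b)$ have a common right multiple in $\mathrm{U_{mon}}(S)$; $a,b$ have a right lcm $a\vee b$ in $S$; $a,b$ have a common right multiple in $S$. When these hold, $\varepsilon_S(a\vee b)$ is the right lcm of $\varepsilon_S(a),\varepsilon_S(b)$. (2) Dually, if $\mathrm{t}(a)=\mathrm{t}(b)$, the following are equivalent: $\varepsilon_S(a),\varepsilon_S(b)$ have a left lcm in $\mathrm{U_{mon}}(S)$; they have a common left multiple there; $a,b$ have a left lcm $a\mathbin{\widetilde\vee} b$ in $S$; $a,b$ have a common left multiple in $S$; and then $\varepsilon_S(a\mathbin{\widetilde\vee} b)$ is the left lcm of $\varepsilon_S(a),\varepsilon_S(b)$.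
   Context: Categories are arrow-only: a set $S$ with partial associative multiplication, identities $\mathrm{Id}\,S$, source/target identities $\mathrm{s}(x),\mathrm{t}(x)$. $\mathrm{U_{mon}}(S)$ is the monoid presented by generators $\varepsilon_S(x)$ ($x\in S$) and relations $\varepsilon_S(e)=1$ ($e\in\mathrm{Id}\,S$), $\varepsilon_S(x)\varepsilon_S(y)=\varepsilon_S(xy)$ whenever $xy$ is defined. In a category or monoid $C$, $a\leqslant_C b$ iff $b=ax$ for some $x$ ($b$ is a right multiple of $a$), and $a\mathbin{\widetilde\leqslant}_C b$ iff $b=xa$ for some $x$ ($b$ a left multiple of $a$). Right lcm = least upper bound for $\leqslant$; left lcm = least upper bound for $\mathbin{\widetilde\leqslant}$; left/right gcd = greatest lower bound for $\leqslant$/$\mathbin{\widetilde\leqslant}$. $S$ is conical if $xy\in\mathrm{Id}\,S$ implies $x\in\mathrm{Id}\,S$. A gcd-category is a conical, left and right cancellative category in which any two elements with the same source have a left gcd and any two elements with the same target have a right gcd. *)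

(* Defs.v *)
From Stdlib Require Import List.
Import ListNotations.
Set Implicit Arguments.

(* An arrow-only category: carrier, source/target maps (valued in identities),
   and a multiplication [mul x y] which is *defined* exactly when
   [tgt x = src y]; its values outside that domain are irrelevant. *)
Record Category := {
  carrier :> Type;
  src : carrier -> carrier;
  tgt : carrier -> carrier;
  mul : carrier -> carrier -> carrier;
  src_src : forall x, src (src x) = src x;
  tgt_src : forall x, tgt (src x) = src x;
  src_tgt : forall x, src (tgt x) = tgt x;
  tgt_tgt : forall x, tgt (tgt x) = tgt x;
  src_mul : forall x y, tgt x = src y -> src (mul x y) = src x;
  tgt_mul : forall x y, tgt x = src y -> tgt (mul x y) = tgt y;
  mul_src : forall x, mul (src x) x = x;
  mul_tgt : forall x, mul x (tgt x) = x;
  mulA : forall x y z, tgt x = src y -> tgt y = src z ->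
           mul (mul x y) z = mul x (mul y z)
}.

Arguments src {c}. Arguments tgt {c}. Arguments mul {c}.

Section Cat.
Variable S : Category.

Definition defd (x y : S) : Prop := tgt x = src y.

Definition isId (e : S) : Prop := src e = e.

Definition rdiv (a b : S) : Prop := exists x, defd a x /\ mul a x = b.
Definition ldiv (a b : S) : Prop := exists x, defd x a /\ mul x a = b.

Definition is_rlcm (a b c : S) : Prop :=
  rdiv a c /\ rdiv b c /\ forall d, rdiv a d -> rdiv b d -> rdiv c d.
Definition is_llcm (a b c : S) : Prop :=
  ldiv a c /\ ldiv b c /\ forall d, ldiv a d -> ldiv b d -> ldiv c d.
Definition is_lgcd (a b c : S) : Prop :=
  rdiv c a /\ rdiv c b /\ forall d, rdiv d a -> rdiv d b -> rdiv d c.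
Definition is_rgcd (a b c : S) : Prop :=
  ldiv c a /\ ldiv c b /\ forall d, ldiv d a -> ldiv d b -> ldiv d c.

Definition conical : Prop :=
  forall x y, defd x y -> isId (mul x y) -> isId x.
Definition left_cancellative : Prop :=
  forall a x y, defd a x -> defd a y -> mul a x = mul a y -> x = y.
Definition right_cancellative : Prop :=
  forall a x y, defd x a -> defd y a -> mul x a = mul y a -> x = y.

Definition gcd_category : Prop :=
  conical /\ left_cancellative /\ right_cancellative /\
  (forall a b, src a = src b -> exists c, is_lgcd a b c) /\
  (forall a b, tgt a = tgt b -> exists c, is_rgcd a b c).

(* U_mon(S): the monoid presented by generators eps(x), x in S, and
   relations eps(e) = 1 (e in Id S), eps(x) eps(y) = eps(xy) when xy is
   defined.  Realised as the free monoid (list S, concatenation) modulo the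
   congruence [ueq] generated by these relations. *)
Inductive ueq : list S -> list S -> Prop :=
  | ueq_id : forall e u v, isId e -> ueq (u ++ e :: v) (u ++ v)
  | ueq_mul : forall x y u v, defd x y ->
      ueq (u ++ x :: y :: v) (u ++ mul x y :: v)
  | ueq_refl : forall u, ueq u u
  | ueq_sym : forall u v, ueq u v -> ueq v u
  | ueq_trans : forall u v w, ueq u v -> ueq v w -> ueq u w.

Definition eps (x : S) : list S := [x].

Definition Urdiv (u v : list S) : Prop := exists w, ueq (u ++ w) v.
Definition Uldiv (u v : list S) : Prop := exists w, ueq (w ++ u) v.

Definition U_is_rlcm (u v m : list S) : Prop :=
  Urdiv u m /\ Urdiv v m /\ forall d, Urdiv u d -> Urdiv v d -> Urdiv m d.
Definition U_is_llcm (u v m : list S) : Prop :=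
  Uldiv u m /\ Uldiv v m /\ forall d, Uldiv u d -> Uldiv v d -> Uldiv m d.

End Cat.
Arguments defd {S}. Arguments isId {S}. Arguments rdiv {S}. Arguments ldiv {S}.
Arguments is_rlcm {S}. Arguments is_llcm {S}. Arguments is_lgcd {S}. Arguments is_rgcd {S}.
Arguments ueq {S}. Arguments eps {S}. Arguments Urdiv {S}. Arguments Uldiv {S}.
Arguments U_is_rlcm {S}. Arguments U_is_llcm {S}.

(* Main.v *)
Require Import Defs.
From Stdlib Require Import List ClassicalEpsilon.
Import ListNotations.
Set Implicit Arguments.

Lemma id_tgt (S : Category) (e : S) : isId e -> tgt e = e.
Proof. unfold isId; intro H; rewrite <- H at 1 2. rewrite tgt_src. reflexivity. Qed.

Lemma mul_id_l (S : Category) (x y : S) : isId x -> defd x y -> mul x y = y.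
Proof. intros H D. unfold defd in D. rewrite (id_tgt H) in D. subst x. apply mul_src. Qed.

Lemma mul_id_r (S : Category) (x y : S) : isId y -> defd x y -> mul x y = x.
Proof. intros H D. unfold defd in D. unfold isId in H. rewrite H in D. subst y. apply mul_tgt. Qed.

Lemma conical_r (S : Category) (x y : S) : conical S -> defd x y -> isId (mul x y) -> isId y.
Proof. intros HC D I. pose proof (HC x y D I) as Ix. rewrite (mul_id_l Ix D) in I. exact I. Qed.

Lemma rdiv_refl (S : Category) (a : S) : rdiv a a.
Proof. exists (tgt a). split. unfold defd. now rewrite src_tgt. apply mul_tgt. Qed.
Arguments rdiv_refl {S} a.

Lemma rdiv_trans (S : Category) (a b c : S) : rdiv a b -> rdiv b c -> rdiv a c.
Proof.
  intros [p [Dp Ep]] [q [Dq Eq]]. subst b c.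
  assert (Dpq : defd p q) by (unfold defd in *; rewrite <- Dq; symmetry; apply tgt_mul; exact Dp).
  exists (mul p q). split.
  - unfold defd. rewrite (src_mul _ _ _ Dpq). exact Dp.
  - symmetry. apply mulA; assumption.
Qed.

Lemma rdiv_mul (S : Category) (a x : S) : defd a x -> rdiv a (mul a x).
Proof. intro D. exists x. auto. Qed.

Definition push (S : Category) (s : list S) (x : S) : list S :=
  if excluded_middle_informative (isId x) then s else
  match s with
  | z :: s' => if excluded_middle_informative (defd z x) then mul z x :: s' else x :: s
  | [] => [x]
  end.

Arguments push {S}.
Definition red (S : Category) (u : list S) : list S := fold_left (@push S) u [].
Arguments red {S}.

Lemma push_id (S : Category) (s : list S) (x : S) : isId x -> push s x = s.
Proof. intro H. unfold push. destruct (excluded_middle_informative (isId x)); tauto. Qed.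

Lemma push_nil (S : Category) (x : S) : ~ isId x -> push [] x = [x].
Proof. intro H. unfold push. destruct (excluded_middle_informative (isId x)); tauto. Qed.
Lemma push_cd (S : Category) (z x : S) s : ~ isId x -> defd z x -> push (z :: s) x = mul z x :: s.
Proof. intros H D. unfold push. destruct (excluded_middle_informative (isId x)); [tauto|].
  destruct (excluded_middle_informative (defd z x)); tauto. Qed.
Lemma push_cn (S : Category) (z x : S) s : ~ isId x -> ~ defd z x -> push (z :: s) x = x :: z :: s.
Proof. intros H D. unfold push. destruct (excluded_middle_informative (isId x)); [tauto|].
  destruct (excluded_middle_informative (defd z x)); tauto. Qed.

Lemma push_mul (S : Category) (HC : conical S) (s : list S) (x y : S) :
  defd x y -> push (push s x) y = push s (mul x y).
Proof.
  intro D.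
  destruct (excluded_middle_informative (isId x)) as [Ix|Ix].
  { rewrite (push_id _ Ix), (mul_id_l Ix D). reflexivity. }
  destruct (excluded_middle_informative (isId y)) as [Iy|Iy].
  { rewrite (push_id _ Iy), (mul_id_r Iy D). reflexivity. }
  assert (Ixy : ~ isId (mul x y)) by (intro I; apply Ix; exact (HC x y D I)).
  destruct s as [|z s'].
  - rewrite !push_nil, push_cd; auto.
  - destruct (excluded_middle_informative (defd z x)) as [Dz|Dz].
    + assert (Dzxy : defd z (mul x y)) by (unfold defd in *; rewrite (src_mul _ _ _ D); exact Dz).
      assert (D' : defd (mul z x) y) by (unfold defd in *; rewrite (tgt_mul _ _ _ Dz); exact D).
      rewrite (push_cd _ Ix Dz), (push_cd _ Iy D'), (push_cd _ Ixy Dzxy).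
      rewrite mulA; auto.
    + assert (Dzxy : ~ defd z (mul x y)) by (unfold defd in *; rewrite (src_mul _ _ _ D); exact Dz).
      rewrite (push_cn _ Ix Dz), (push_cd _ Iy D), (push_cn _ Ixy Dzxy). reflexivity.
Qed.

Lemma red_app (S : Category) (u v : list S) : red (u ++ v) = fold_left (@push S) v (red u).
Proof. unfold red. apply fold_left_app. Qed.

Lemma ueq_red (S : Category) (HC : conical S) (u v : list S) : ueq u v -> red u = red v.
Proof.
  induction 1.
  - rewrite !red_app. simpl. rewrite push_id; auto.
  - rewrite !red_app. simpl. rewrite push_mul; auto.
  - reflexivity.
  - auto.
  - congruence.
Qed.

Lemma push_ueq (S : Category) (s : list S) (x : S) w :
  ueq (rev s ++ x :: w) (rev (push s x) ++ w).
Proof.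
  unfold push.
  destruct (excluded_middle_informative (isId x)) as [I|I].
  - apply ueq_id; auto.
  - destruct s as [|z s'].
    + apply ueq_refl.
    + destruct (excluded_middle_informative (defd z x)) as [D|D].
      * simpl. rewrite <- !app_assoc. simpl. apply ueq_mul; auto.
      * simpl. rewrite <- !app_assoc. simpl. apply ueq_refl.
Qed.

Lemma ueq_nf (S : Category) (u : list S) : forall w, ueq (u ++ w) (rev (red u) ++ w).
Proof.
  induction u as [|x u IH] using rev_ind; intro w.
  - apply ueq_refl.
  - rewrite <- app_assoc. simpl.
    eapply ueq_trans. apply IH.
    unfold red. rewrite fold_left_app. simpl. apply push_ueq.
Qed.

Definition bottom (S : Category) (a : S) (s : list S) : Prop :=
  exists s' e, s = s' ++ [e] /\ rdiv a e.
Arguments bottom {S}.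

Lemma push_bottom (S : Category) (a : S) s (x : S) : bottom a s -> bottom a (push s x).
Proof.
  intros [s' [e [E R]]]. subst s. unfold push.
  destruct (excluded_middle_informative (isId x)). { exists s', e; auto. }
  destruct s' as [|z s''].
  - simpl. destruct (excluded_middle_informative (defd e x)) as [D|D].
    + exists [], (mul e x). split; auto. eapply rdiv_trans. exact R. apply rdiv_mul; auto.
    + exists [x], e. auto.
  - simpl. destruct (excluded_middle_informative (defd z x)).
    + exists (mul z x :: s''), e. auto.
    + exists (x :: z :: s''), e. auto.
Qed.

Lemma fold_bottom (S : Category) (a : S) w : forall s, bottom a s -> bottom a (fold_left (@push S) w s).
Proof. induction w; intros s H; simpl; auto. apply IHw. apply push_bottom; auto. Qed.

Lemma Urdiv_char (S : Category) (HC : conical S) (a : S) d :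
  ~ isId a -> Urdiv (eps a) d -> bottom a (red d).
Proof.
  intros I [w E]. apply ueq_red in E; auto. rewrite <- E.
  rewrite red_app. apply fold_bottom.
  unfold red. simpl. unfold push. destruct (excluded_middle_informative (isId a)); [tauto|].
  exists [], a. split; auto. apply rdiv_refl.
Qed.

Lemma Urdiv_from (S : Category) (c e : S) d s' :
  red d = s' ++ [e] -> rdiv c e -> Urdiv (eps c) d.
Proof.
  intros E [y [D Ey]]. exists (y :: rev s').
  eapply ueq_trans. apply (ueq_mul [] (rev s') D).
  simpl. rewrite Ey.
  apply ueq_sym. pose proof (ueq_nf _ d []) as H. rewrite !app_nil_r in H.
  rewrite E, rev_app_distr in H. exact H.
Qed.
Arguments Urdiv_from {S c e d s'}.

Lemma Urdiv_of_rdiv (S : Category) (a c : S) : rdiv a c -> Urdiv (eps a) (eps c).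
Proof. intros [x [D E]]. exists [x]. subst c. apply (ueq_mul [] [] D). Qed.

Lemma Urdiv_id (S : Category) (a : S) d : isId a -> Urdiv (eps a) d.
Proof. intro I. exists d. apply (ueq_id [] d I). Qed.

Lemma rdiv_id_l (S : Category) (a b : S) : isId a -> src a = src b -> rdiv a b.
Proof.
  intros I E. exists b. assert (D : defd a b) by (unfold defd; rewrite (id_tgt I); rewrite <- E; symmetry; exact I).
  split; auto. apply mul_id_l; auto.
Qed.
Arguments rdiv_id_l {S a b}.

Lemma rlcm_id (S : Category) (HS : gcd_category S) (a b c : S) :
  isId a -> src a = src b -> is_rlcm a b c -> c = b.
Proof.
  destruct HS as [HC [HL _]].
  intros I E [_ [[x [Dx Ex]] U]].
  destruct (U b (rdiv_id_l I E) (rdiv_refl b)) as [y [Dy Ey]].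
  assert (Dxy : defd x y) by (unfold defd in *; rewrite <- Dy, <- Ex; symmetry; apply tgt_mul; auto).
  assert (H1 : mul b (mul x y) = mul b (tgt b)).
  { rewrite <- mulA; auto. rewrite Ex, Ey. symmetry; apply mul_tgt. }
  apply HL in H1.
  - assert (Ix : isId x). { apply (HC x y Dxy). rewrite H1. unfold isId. apply src_tgt. }
    rewrite <- Ex. apply mul_id_r; auto.
  - unfold defd in *. rewrite (src_mul _ _ _ Dxy). exact Dx.
  - unfold defd. rewrite src_tgt. reflexivity.
Qed.

Lemma is_rlcm_sym (S : Category) (a b c : S) : is_rlcm a b c -> is_rlcm b a c.
Proof. intros [A [B U]]. split; auto. Qed.

Lemma rlcm_U (S : Category) (HS : gcd_category S) (a b c : S) :
  src a = src b -> is_rlcm a b c -> U_is_rlcm (eps a) (eps b) (eps c).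
Proof.
  intros E L. pose proof L as [A [B U]].
  split; [apply Urdiv_of_rdiv; auto|]. split; [apply Urdiv_of_rdiv; auto|].
  intros d Ha Hb.
  destruct (excluded_middle_informative (isId a)) as [Ia|Ia].
  { rewrite (rlcm_id HS Ia E L). exact Hb. }
  destruct (excluded_middle_informative (isId b)) as [Ib|Ib].
  { rewrite (rlcm_id HS Ib (eq_sym E) (is_rlcm_sym L)). exact Ha. }
  pose proof HS as [HC _].
  destruct (Urdiv_char HC Ia Ha) as [s1 [e1 [E1 R1]]].
  destruct (Urdiv_char HC Ib Hb) as [s2 [e2 [E2 R2]]].
  rewrite E1 in E2. apply app_inj_tail in E2. destruct E2 as [_ <-].
  apply (Urdiv_from E1). apply U; auto.
Qed.

Lemma cm_U_S (S : Category) (HS : gcd_category S) (a b : S) m :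
  src a = src b -> Urdiv (eps a) m -> Urdiv (eps b) m -> exists c, rdiv a c /\ rdiv b c.
Proof.
  intros E Ha Hb.
  destruct (excluded_middle_informative (isId a)) as [Ia|Ia].
  { exists b. split. apply rdiv_id_l; auto. apply rdiv_refl. }
  destruct (excluded_middle_informative (isId b)) as [Ib|Ib].
  { exists a. split. apply rdiv_refl. apply rdiv_id_l; auto. }
  pose proof HS as [HC _].
  destruct (Urdiv_char HC Ia Ha) as [s1 [e1 [E1 R1]]].
  destruct (Urdiv_char HC Ib Hb) as [s2 [e2 [E2 R2]]].
  rewrite E1 in E2. apply app_inj_tail in E2. destruct E2 as [_ <-].
  exists e1; auto.
Qed.

Lemma lcm_from_cm (S : Category) (HS : gcd_category S) (a b d : S) :
  rdiv a d -> rdiv b d -> exists c, is_rlcm a b c.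
Proof.
  destruct HS as [HC [HL [HR [Hlg Hrg]]]].
  intros [x [Hax Hx]] [y [Hby Hy]].
  assert (Htxy : tgt x = tgt y).
  { rewrite <- (tgt_mul _ _ _ Hax), <- (tgt_mul _ _ _ Hby), Hx, Hy. reflexivity. }
  destruct (Hrg x y Htxy) as [z [[x' [Hx'z Ex]] [[y' [Hy'z Ey]] Hz]]].
  assert (Dax' : defd a x').
  { unfold defd in *. rewrite Hax, <- Ex. apply src_mul; auto. }
  assert (Dby' : defd b y').
  { unfold defd in *. rewrite Hby, <- Ey. apply src_mul; auto. }
  assert (Dc : defd (mul a x') z).
  { unfold defd in *. rewrite (tgt_mul _ _ _ Dax'). exact Hx'z. }
  assert (Dc' : defd (mul b y') z).
  { unfold defd in *. rewrite (tgt_mul _ _ _ Dby'). exact Hy'z. }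
  assert (Ec : mul a x' = mul b y').
  { apply (HR z); auto. rewrite !mulA; auto. rewrite Ex, Ey, Hx, Hy. reflexivity. }
  exists (mul a x'). split; [exists x'; auto|]. split; [exists y'; auto|].
  intros e [p [Hap Ep]] [q [Hbq Eq]].
  assert (Hsrc : src (mul a x') = src e).
  { rewrite <- Ep, !src_mul; auto. }
  destruct (Hlg _ _ Hsrc) as [g [[h [Hgh Eh]] [Hge Hg]]].
  destruct (Hg a (rdiv_mul Dax') (ex_intro _ p (conj Hap Ep))) as [s [Has Es]].
  destruct (Hg b (ex_intro _ y' (conj Dby' (eq_sym Ec))) (ex_intro _ q (conj Hbq Eq))) as [t [Hbt Et]].
  assert (Dsh : defd s h).
  { unfold defd in *. rewrite <- Hgh, <- Es. symmetry. apply tgt_mul; auto. }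
  assert (Dth : defd t h).
  { unfold defd in *. rewrite <- Hgh, <- Et. symmetry. apply tgt_mul; auto. }
  assert (Ex' : x' = mul s h).
  { apply (HL a); auto.
    - unfold defd in *. rewrite (src_mul _ _ _ Dsh). exact Has.
    - rewrite <- mulA; auto. rewrite Es, Eh. reflexivity. }
  assert (Ey' : y' = mul t h).
  { apply (HL b); auto.
    - unfold defd in *. rewrite (src_mul _ _ _ Dth). exact Hbt.
    - rewrite <- mulA; auto. rewrite Et, Eh. auto. }
  assert (Dhz : defd h z).
  { unfold defd in *. rewrite <- Hx'z, Ex'. symmetry. apply tgt_mul; auto. }
  assert (Ldx : ldiv (mul h z) x).
  { exists s. split.
    - unfold defd in *. rewrite (src_mul _ _ _ Dhz). exact Dsh.
    - rewrite <- Ex, Ex'. symmetry. apply mulA; auto. }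
  assert (Ldy : ldiv (mul h z) y).
  { exists t. split.
    - unfold defd in *. rewrite (src_mul _ _ _ Dhz). exact Dth.
    - rewrite <- Ey, Ey'. symmetry. apply mulA; auto. }
  destruct (Hz _ Ldx Ldy) as [k [Dk Ek]].
  assert (Dkh : defd k h).
  { unfold defd in *. rewrite Dk. apply src_mul; auto. }
  assert (Ekh : mul k h = src z).
  { apply (HR z).
    - unfold defd in *. rewrite (tgt_mul _ _ _ Dkh). exact Dhz.
    - unfold defd. apply tgt_src.
    - rewrite mulA, Ek; auto. symmetry. apply mul_src. }
  assert (Ih : isId h).
  { apply (conical_r HC Dkh). rewrite Ekh. unfold isId. apply src_src. }
  rewrite <- Eh, (mul_id_r Ih Hgh).
  exact Hge.
Qed.

Lemma part1 (S : Category) (HS : gcd_category S) (a b : S) :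
  src a = src b ->
     ((exists m, U_is_rlcm (eps a) (eps b) m) <->
      (exists m, Urdiv (eps a) m /\ Urdiv (eps b) m)) /\
     ((exists m, Urdiv (eps a) m /\ Urdiv (eps b) m) <->
      (exists c, is_rlcm a b c)) /\
     ((exists c, is_rlcm a b c) <->
      (exists c, rdiv a c /\ rdiv b c)) /\
     (forall c, is_rlcm a b c -> U_is_rlcm (eps a) (eps b) (eps c)).
Proof.
  intro E.
  assert (BC : (exists m, Urdiv (eps a) m /\ Urdiv (eps b) m) -> exists c, is_rlcm a b c).
  { intros [m [Ha Hb]]. destruct (cm_U_S HS E Ha Hb) as [d [Hd1 Hd2]].
    exact (lcm_from_cm HS Hd1 Hd2). }
  assert (CA : (exists c, is_rlcm a b c) -> exists m, U_is_rlcm (eps a) (eps b) m).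
  { intros [c L]. exists (eps c). exact (rlcm_U HS E L). }
  split; [|split; [|split]].
  - split; auto. intros [m [A [B _]]]. exists m; auto.
  - split; auto. intro H. destruct (CA H) as [m [A [B _]]]. exists m; auto.
  - split. intros [c [A [B _]]]. exists c; auto.
    intros [d [A B]]. exact (lcm_from_cm HS A B).
  - intros c L. exact (rlcm_U HS E L).
Qed.

Definition Op (S : Category) : Category.
Proof.
  refine (@Build_Category S (@tgt S) (@src S) (fun x y => @mul S y x) _ _ _ _ _ _ _ _ _).
  - apply tgt_tgt.
  - apply src_tgt.
  - apply tgt_src.
  - apply src_src.
  - intros x y H. apply tgt_mul. auto.
  - intros x y H. apply src_mul. auto.
  - apply mul_tgt.
  - apply mul_src.
  - intros x y z H1 H2. symmetry. apply mulA; auto.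
Defined.

Lemma defd_op (S : Category) (x y : S) : @defd (Op S) x y <-> defd y x.
Proof. unfold defd; simpl; split; auto. Qed.

Lemma isId_op (S : Category) (e : S) : @isId (Op S) e <-> isId e.
Proof.
  unfold isId; simpl; split; intro H.
  - rewrite <- H. apply src_tgt.
  - rewrite <- H. apply tgt_src.
Qed.

Lemma rdiv_op (S : Category) (a c : S) : @rdiv (Op S) a c <-> ldiv a c.
Proof. unfold rdiv, ldiv; split; intros [x [D E]]; exists x; split; auto; apply defd_op; auto. Qed.
Lemma ldiv_op (S : Category) (a c : S) : @ldiv (Op S) a c <-> rdiv a c.
Proof. unfold rdiv, ldiv; split; intros [x [D E]]; exists x; split; auto; apply defd_op; auto. Qed.

Lemma rlcm_op (S : Category) (a b c : S) : @is_rlcm (Op S) a b c <-> is_llcm a b c.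
Proof.
  unfold is_rlcm, is_llcm. split; intros [A [B U]]; split; [|split|apply rdiv_op; auto|split].
  - apply rdiv_op; auto.
  - apply rdiv_op; auto.
  - intros d Ha Hb. apply rdiv_op. apply U; apply rdiv_op; auto.
  - apply rdiv_op; auto.
  - intros d Ha Hb. apply rdiv_op. apply U; apply rdiv_op; auto.
Qed.

Lemma gcd_op (S : Category) : gcd_category S -> gcd_category (Op S).
Proof.
  intros [HC [HL [HR [Hlg Hrg]]]].
  split; [|split; [|split; [|split]]].
  - intros x y D I. apply isId_op. apply defd_op in D. apply isId_op in I.
    exact (conical_r HC D I).
  - intros a x y Dx Dy E. apply defd_op in Dx. apply defd_op in Dy. exact (HR a x y Dx Dy E).
  - intros a x y Dx Dy E. apply defd_op in Dx. apply defd_op in Dy. exact (HL a x y Dx Dy E).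
  - intros a b E. destruct (Hrg a b E) as [c [A [B U]]]. exists c.
    split; [apply rdiv_op; auto|split; [apply rdiv_op; auto|]].
    intros d Ha Hb. apply rdiv_op. apply U; apply rdiv_op; auto.
  - intros a b E. destruct (Hlg a b E) as [c [A [B U]]]. exists c.
    split; [apply ldiv_op; auto|split; [apply ldiv_op; auto|]].
    intros d Ha Hb. apply ldiv_op. apply U; apply ldiv_op; auto.
Qed.

Lemma rev_mid1 (A : Type) (u v : list A) x : rev (u ++ x :: v) = rev v ++ x :: rev u.
Proof. rewrite rev_app_distr. simpl. rewrite <- app_assoc. reflexivity. Qed.
Lemma rev_mid2 (A : Type) (u v : list A) x y : rev (u ++ x :: y :: v) = rev v ++ y :: x :: rev u.
Proof. rewrite rev_app_distr. simpl. rewrite <- !app_assoc. reflexivity. Qed.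

Lemma ueq_op (S : Category) (u v : list S) : ueq u v -> @ueq (Op S) (rev u) (rev v).
Proof.
  induction 1.
  - rewrite rev_mid1, rev_app_distr. apply (@ueq_id (Op S)). apply isId_op; auto.
  - rewrite rev_mid2, rev_mid1. apply (@ueq_mul (Op S) y x). apply defd_op; auto.
  - apply ueq_refl.
  - apply ueq_sym; auto.
  - eapply ueq_trans; eauto.
Qed.

Lemma ueq_op' (S : Category) (u v : list S) : @ueq (Op S) u v -> ueq (rev u) (rev v).
Proof.
  induction 1.
  - rewrite rev_mid1, rev_app_distr. exact (@ueq_id S e (rev v) (rev u) (proj1 (isId_op S e) H)).
  - rewrite rev_mid2, rev_mid1. exact (@ueq_mul S y x (rev v) (rev u) (proj1 (defd_op S x y) H)).
  - apply ueq_refl.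
  - apply ueq_sym; auto.
  - eapply ueq_trans; eauto.
Qed.

Lemma Uldiv_op (S : Category) (u m : list S) : Uldiv u m <-> @Urdiv (Op S) (rev u) (rev m).
Proof.
  split.
  - intros [w E]. exists (rev w). apply ueq_op in E. rewrite rev_app_distr in E. exact E.
  - intros [w E]. exists (rev w). apply ueq_op' in E. rewrite rev_app_distr, !rev_involutive in E. exact E.
Qed.

Lemma Uldiv_op' (S : Category) (u m : list S) : Uldiv (rev u) (rev m) <-> @Urdiv (Op S) u m.
Proof. rewrite Uldiv_op, !rev_involutive. reflexivity. Qed.

Arguments Uldiv_op {S}. Arguments Uldiv_op' {S}.
Lemma llcm_op (S : Category) (a b : S) m :
  U_is_llcm (eps a) (eps b) m <-> @U_is_rlcm (Op S) (eps a) (eps b) (rev m).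
Proof.
  unfold U_is_llcm, U_is_rlcm. split; intros [A [B U]].
  - split; [apply (Uldiv_op (eps a) m); auto|split; [apply (Uldiv_op (eps b) m); auto|]].
    intros d Ha Hb. apply Uldiv_op'. rewrite rev_involutive. apply U.
    + apply (Uldiv_op' (eps a) d); auto.
    + apply (Uldiv_op' (eps b) d); auto.
  - split; [apply (Uldiv_op (eps a) m); auto|split; [apply (Uldiv_op (eps b) m); auto|]].
    intros d Ha Hb. apply Uldiv_op. apply U.
    + apply (Uldiv_op (eps a) d); auto.
    + apply (Uldiv_op (eps b) d); auto.
Qed.

Arguments llcm_op {S}.
Theorem proposition5p10 (S : Category) (HS : gcd_category S) (a b : S) :
  (src a = src b ->
     ((exists m, U_is_rlcm (eps a) (eps b) m) <->
      (exists m, Urdiv (eps a) m /\ Urdiv (eps b) m)) /\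
     ((exists m, Urdiv (eps a) m /\ Urdiv (eps b) m) <->
      (exists c, is_rlcm a b c)) /\
     ((exists c, is_rlcm a b c) <->
      (exists c, rdiv a c /\ rdiv b c)) /\
     (forall c, is_rlcm a b c -> U_is_rlcm (eps a) (eps b) (eps c)))
  /\
  (tgt a = tgt b ->
     ((exists m, U_is_llcm (eps a) (eps b) m) <->
      (exists m, Uldiv (eps a) m /\ Uldiv (eps b) m)) /\
     ((exists m, Uldiv (eps a) m /\ Uldiv (eps b) m) <->
      (exists c, is_llcm a b c)) /\
     ((exists c, is_llcm a b c) <->
      (exists c, ldiv a c /\ ldiv b c)) /\
     (forall c, is_llcm a b c -> U_is_llcm (eps a) (eps b) (eps c))).
Proof.
  split. { apply part1; auto. }
  intro E.
  destruct (@part1 (Op S) (gcd_op HS) a b E) as [P1 [P2 [P3 P4]]].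
  assert (T1 : (exists m, U_is_llcm (eps a) (eps b) m) <->
               (exists m, @U_is_rlcm (Op S) (eps a) (eps b) m)).
  { split; intros [m H].
    - exists (rev m). apply llcm_op; auto.
    - exists (rev m). apply llcm_op. rewrite rev_involutive. auto. }
  assert (T2 : (exists m, Uldiv (eps a) m /\ Uldiv (eps b) m) <->
               (exists m, @Urdiv (Op S) (eps a) m /\ @Urdiv (Op S) (eps b) m)).
  { split; intros [m [H1 H2]].
    - exists (rev m). split; [apply (proj1 (Uldiv_op (eps a) m)) | apply (proj1 (Uldiv_op (eps b) m))]; auto.
    - exists (rev m). split; [apply (proj2 (Uldiv_op' (eps a) m)) | apply (proj2 (Uldiv_op' (eps b) m))]; auto. }
  assert (T3 : (exists c, is_llcm a b c) <-> (exists c, @is_rlcm (Op S) a b c)).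
  { split; intros [c H]; exists c; apply rlcm_op; auto. }
  assert (T4 : (exists c, ldiv a c /\ ldiv b c) <-> (exists c, @rdiv (Op S) a c /\ @rdiv (Op S) b c)).
  { split; intros [c [H1 H2]]; exists c; split; apply rdiv_op; auto. }
  rewrite T1, T2, T3, T4.
  split; [|split; [|split]]; auto.
  intros c L. apply (llcm_op a b (eps c)). apply P4. apply rlcm_op; auto.
Qed.
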